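(* If $\Delta(w)=\emptyset$ for some $w\in\mathbb Z_{d,\ell}$, then $\kappa=1$ and $w=-\mu_1$.
   Context: Let $\mathbf K$ be a field and $\ell\geq 2$ an integer. Let $L=a_n\phi_\ell^n+\dots+a_0$ with $n\geq1$, $a_i\in\mathbf K[z]$, $a_0a_n\neq0$, where $\phi_\ell(f)(z)=f(z^\ell)$. Let $\mathcal P(L)=\{(\ell^i,j): 0\le i\le n,\ j\in\operatorname{supp} a_i\}$. The Newton polygon of $L$ is the convex hull of $\{(\ell^i,j): 0\le i\le n,\ j\geq\operatorname{val} a_i\}\subset\mathbb R^2$; its non-vertical edges have pairwise distinct slopes $\mu_1<\dots<\mu_\kappa$. Let $d\geq1$ be a common multiple of the denominators of the $\mu_k$ and $\mathbb Z_{d,\ell}=\bigcup_{i\geq0}\frac{1}{d\ell^i}\mathbb Z$. Define $\psi(v)=\min\{v\ell^i+j:(\ell^i,j)\in\mathcal P(L)\}$ and $\Delta(w)=\left\{\frac{\psi(w)-\beta}{\ell^\alpha}:(\ell^\alpha,\beta)\in\mathcal P(L)\right\}\setminus\{w\}$. *)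

(* Defs.v *)
From HB Require Import structures.
From mathcomp Require Import all_boot all_order all_algebra.
Set Implicit Arguments. Unset Strict Implicit. Unset Printing Implicit Defensive.
Import Order.TTheory GRing.Theory Num.Theory.
Local Open Scope ring_scope.

(* The operator L = a_n phi_l^n + ... + a_0 is represented by its list of
   coefficients  a : nat -> {poly K}  (only a 0, ..., a n are relevant). *)

Definition valp (K : fieldType) (p : {poly K}) : nat := find (fun c => c != 0) p.

Definition suppp (K : fieldType) (p : {poly K}) : seq nat :=
  [seq j <- iota 0 (size p) | p`_j != 0].

Definition PL (K : fieldType) (l n : nat) (a : nat -> {poly K}) : seq (rat * rat) :=
  [seq ((l ^ i)%:R, j%:R) | i <- iota 0 n.+1, j <- suppp (a i)].

Definition psi (K : fieldType) (l n : nat) (a : nat -> {poly K}) (v : rat) : rat :=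
  let p0 := head (0, 0) (PL l n a) in
  \big[Num.min/ v * p0.1 + p0.2]_(p <- PL l n a) (v * p.1 + p.2).

Definition Delta (K : fieldType) (l n : nat) (a : nat -> {poly K}) (w : rat) : seq rat :=
  [seq x <- [seq (psi l n a w - p.2) / p.1 | p <- PL l n a] | x != w].

Definition NPgen (K : fieldType) (l n : nat) (a : nat -> {poly K}) (p : rat * rat) : Prop :=
  exists i : nat, (i <= n)%N /\ a i != 0 /\ p.1 = (l ^ i)%:R /\ (valp (a i))%:R <= p.2.

Definition newton_polygon (K : fieldType) (l n : nat) (a : nat -> {poly K}) (p : rat * rat) : Prop :=
  exists (k : nat) (c : 'I_k -> rat) (q : 'I_k -> rat * rat),
    (forall i, 0 <= c i) /\ \sum_(i < k) c i = 1 /\ (forall i, NPgen l n a (q i)) /\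
    p = (\sum_(i < k) c i * (q i).1, \sum_(i < k) c i * (q i).2).

(* mu is the slope of a non-vertical edge of the Newton polygon: the line
   y = mu x + c supports the polygon (the polygon lies above it; the polygon is
   unbounded upwards, so no non-vertical supporting line has it below) and
   meets it in a segment (at least two distinct points). *)
Definition edge_slope (K : fieldType) (l n : nat) (a : nat -> {poly K}) (mu : rat) : Prop :=
  exists c : rat,
    (forall p, newton_polygon l n a p -> mu * p.1 + c <= p.2) /\
    exists p q, newton_polygon l n a p /\ newton_polygon l n a q /\ p <> q /\
      p.2 = mu * p.1 + c /\ q.2 = mu * q.1 + c.

Definition Zdl (d l : nat) (w : rat) : Prop :=
  exists (i : nat) (m : int), w = m%:~R / (d * l ^ i)%:R.

(* Main.v *)
Require Import Defs.
From HB Require Import structures.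
From mathcomp Require Import all_boot all_order all_algebra.
From mathcomp Require Import ring lra.
Import Order.TTheory GRing.Theory Num.Theory.
Local Open Scope ring_scope.

Lemma conv_ge0 (K : fieldType) (l n : nat) (a : nat -> {poly K}) (al be ga : rat) (p : rat * rat) :
  (forall q, NPgen l n a q -> 0 <= al * q.1 + be * q.2 + ga) ->
  newton_polygon l n a p -> 0 <= al * p.1 + be * p.2 + ga.
Proof.
move=> H [k [c [q [c0 [s1 [Hq ->]]]]]] /=.
have -> : al * (\sum_(i < k) c i * (q i).1) + be * (\sum_(i < k) c i * (q i).2) + ga
   = \sum_(i < k) c i * (al * (q i).1 + be * (q i).2 + ga).
  symmetry; rewrite (eq_bigr (fun i => al * (c i * (q i).1) + be * (c i * (q i).2) + c i * ga)); last by move=> i _; ring.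
  by rewrite !big_split /= -!mulr_sumr -mulr_suml s1 mul1r.
by apply: sumr_ge0 => i _; apply: mulr_ge0 => //; apply: H.
Qed.

Arguments conv_ge0 {K l n a al be ga p}.

Lemma valp_supp (K : fieldType) (p : {poly K}) : p != 0 -> valp p \in suppp p.
Proof.
move=> p0; rewrite /suppp mem_filter mem_iota /= add0n.
have hs : has (fun c => c != 0) p.
  apply/hasP; exists (lead_coef p); last by rewrite lead_coef_eq0.
  by rewrite lead_coefE; apply: mem_nth; rewrite prednK // size_poly_gt0.
rewrite /valp -has_find hs andbT.
exact: (nth_find 0 hs).
Qed.

Theorem mainTheorem14 (K : fieldType) (l n : nat) (a : nat -> {poly K}) (d : nat) (w : rat) :
  (2 <= l)%N -> (1 <= n)%N -> a 0%N != 0 -> a n != 0 ->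
  (1 <= d)%N ->
  (forall mu, edge_slope l n a mu -> (denq mu %| (d%:Z))%Z) ->
  Zdl d l w ->
  Delta l n a w = [::] ->
  (* kappa = 1 and mu_1 = -w : the set of edge slopes is exactly {-w} *)
  (forall mu, edge_slope l n a mu <-> mu = - w).
Proof.
move=> l2 n1 a0 an _ _ _ HD.
set c0 := psi l n a w.
have HPL : forall p, p \in PL l n a -> (c0 - p.2) / p.1 = w.
  move=> p Hp; apply/eqP; apply/negPn/negP => Hne.
  have : (c0 - p.2) / p.1 \in Delta l n a w.
    by rewrite /Delta mem_filter Hne /= (map_f (fun p => (psi l n a w - p.2) / p.1) Hp).
  by rewrite HD.
have lpos : forall i, 0 < ((l ^ i)%N%:R : rat).
  by move=> i; rewrite ltr0n expn_gt0; apply/orP; left; apply: leq_trans l2.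
have Hv : forall i, (i <= n)%N -> a i != 0 ->
    ((valp (a i))%:R : rat) = c0 - w * (l ^ i)%N%:R.
  move=> i hi ai.
  have := HPL ((l ^ i)%N%:R, (valp (a i))%:R).
  rewrite /PL (allpairs_f_dep (fun i j => (((l ^ i)%N%:R : rat), (j%:R : rat)))) /=; last first.
  - exact: valp_supp.
  - by rewrite -/(iota 0 n.+1) mem_iota add0n ltnS.
  move=> /(_ isT) /(congr1 (fun x => x * (l ^ i)%N%:R)).
  rewrite divfK; last by rewrite gt_eqF.
  move=> h; rewrite -h; ring.
set L : rat := (l ^ n)%N%:R.
have L1 : 1 < L.
  by rewrite /L (_ : 1 = (l ^ 0)%N%:R :> rat) // ltr_nat ltn_exp2l.
have Hlo : forall p, newton_polygon l n a p -> c0 - w * p.1 <= p.2.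
  move=> p Hp; rewrite -subr_ge0.
  have E : p.2 - (c0 - w * p.1) = w * p.1 + 1 * p.2 + - c0 by ring.
  rewrite E; apply: (conv_ge0 _ Hp) => q [i [hi [ai [-> hq]]]].
  rewrite (Hv i hi ai) in hq; lra.
have H1 : forall p, newton_polygon l n a p -> 1 <= p.1.
  move=> p Hp; rewrite -subr_ge0.
  have E : p.1 - 1 = 1 * p.1 + 0 * p.2 + - 1 by ring.
  rewrite E; apply: (conv_ge0 _ Hp) => q [i [hi [ai [-> hq]]]].
  rewrite mul1r mul0r addr0 subr_ge0 (_ : 1 = (l ^ 0)%N%:R :> rat) // ler_nat leq_pexp2l //.
  exact: leq_trans l2.
have HL : forall p, newton_polygon l n a p -> p.1 <= L.
  move=> p Hp; rewrite -subr_ge0.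
  have E : L - p.1 = -1 * p.1 + 0 * p.2 + L by ring.
  rewrite E; apply: (conv_ge0 _ Hp) => q [i [hi [ai [-> hq]]]].
  rewrite mul0r addr0 mulN1r addrC subr_ge0 /L ler_nat leq_pexp2l //.
  exact: leq_trans l2.
have inNP : forall i, (i <= n)%N -> a i != 0 ->
    newton_polygon l n a ((l ^ i)%N%:R, c0 - w * (l ^ i)%N%:R).
  move=> i hi ai.
  exists 1%N, (fun _ => 1), (fun _ => ((l ^ i)%N%:R, c0 - w * (l ^ i)%N%:R)).
  split => //; split; first by rewrite big_ord1.
  split; last by rewrite !big_ord1 !mul1r.
  by move=> _; exists i; rewrite (Hv i hi ai).
have A := inNP 0%N (leq0n n) a0.
have B := inNP n (leqnn n) an.
rewrite expn0 in A.
move=> mu; split.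
- move=> [c [Hc [p [q [Hp [Hq [pq [ep eq]]]]]]]].
  have hA := Hc _ A; have hB := Hc _ B; rewrite /= in hA hB.
  have lp := Hlo _ Hp; have lq := Hlo _ Hq.
  have p1 := H1 _ Hp; have q1 := H1 _ Hq; have pL := HL _ Hp; have qL := HL _ Hq.
  rewrite -/L in hB.
  set m := mu + w.
  have Ep : m * p.1 + (c - c0) = 0.
    apply/eqP; rewrite eq_le; apply/andP; split; last by rewrite /m; lra.
    have : (L - 1) * (m * p.1 + (c - c0)) <= 0.
      have -> : (L - 1) * (m * p.1 + (c - c0)) =
        (L - p.1) * (m + (c - c0)) + (p.1 - 1) * (m * L + (c - c0)) by ring.
      rewrite -oppr_ge0 opprD -!mulrN; apply: addr_ge0; apply: mulr_ge0; rewrite /m; lra.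
    rewrite pmulr_rle0 //; lra.
  have Eq : m * q.1 + (c - c0) = 0.
    apply/eqP; rewrite eq_le; apply/andP; split; last by rewrite /m; lra.
    have : (L - 1) * (m * q.1 + (c - c0)) <= 0.
      have -> : (L - 1) * (m * q.1 + (c - c0)) =
        (L - q.1) * (m + (c - c0)) + (q.1 - 1) * (m * L + (c - c0)) by ring.
      rewrite -oppr_ge0 opprD -!mulrN; apply: addr_ge0; apply: mulr_ge0; rewrite /m; lra.
    rewrite pmulr_rle0 //; lra.
  have : m * (p.1 - q.1) = 0 by rewrite mulrBr; lra.
  move/eqP; rewrite mulf_eq0 => /orP [/eqP m0 | /eqP pq1].
  + by move: m0; rewrite /m; lra.
  + exfalso; apply: pq.
    have e1 : p.1 = q.1 by lra.
    have e2 : p.2 = q.2 by rewrite ep eq e1.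
    by case: p q {Hp Hq ep eq lp lq p1 q1 pL qL Ep Eq pq1} e1 e2 => ? ? [? ?] /= -> ->.
- move=> ->; exists c0; split.
    by move=> p /Hlo; lra.
  exists (1, c0 - w * 1), (L, c0 - w * L); do 2 (split => //).
  split; first by case => /eqP; rewrite eq_sym gt_eqF.
  by split => /=; ring.
Qed.
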